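(* There exist no binary orthogonal arrays of parameters $(n,M,\tau)=(10,112,4)$ or $(11,112,4)$, i.e. of length $10$ or $11$, cardinality $112=7\cdot 2^4$ and strength $4$.
   Context: A binary orthogonal array of parameters $(n,M,\tau)$ is the multiset of rows of an $M\times n$ binary matrix such that every $M\times\tau$ submatrix contains each ordered $\tau$-tuple of $\{0,1\}^\tau$ exactly $M/2^\tau$ times as rows. *)

(* Defs.v *)
From mathcomp Require Import all_boot.
Set Implicit Arguments. Unset Strict Implicit. Unset Printing Implicit Defensive.

Definition bword (n : nat) := {ffun 'I_n -> bool}.

(* A binary orthogonal array with parameters (n, M, tau): a multiset of M rows
   (given as a sequence of length M of binary words of length n) such that for
   every choice of tau distinct columns c_0,...,c_{tau-1} (an injective map
   c : 'I_tau -> 'I_n, i.e. every M x tau submatrix, with columns in any order),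
   each tau-tuple v in {0,1}^tau appears exactly M / 2^tau times as a row of
   that submatrix.  We also require that 2^tau divides M, as implicit in the
   definition ("exactly M/2^tau times"). *)
Definition is_binary_OA (n M tau : nat) (C : seq (bword n)) : Prop :=
  size C = M /\ (2 ^ tau %| M) /\
  forall (c : 'I_tau -> 'I_n), injective c ->
  forall (v : {ffun 'I_tau -> bool}),
    count (fun x : bword n => [forall i, x (c i) == v i]) C = M %/ 2 ^ tau.
Arguments is_binary_OA : clear implicits.

(* Main.v *)
Require Import Defs.
From mathcomp Require Import all_boot all_order all_algebra zify.
From Stdlib Require Import Lia.
Import Order.TTheory GRing.Theory Num.Theory.
Set Implicit Arguments. Unset Strict Implicit. Unset Printing Implicit Defensive.

Lemma count_split (T : Type) (a b : pred T) (s : seq T) :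
  count a s = count (fun x => a x && b x) s + count (fun x => a x && ~~ b x) s.
Proof. elim: s => //= x s ->; case: (a x); case: (b x) => /=; lia. Qed.

Section L1.
Variable n : nat.
Variable C : seq (bword n).
Hypothesis hC : is_binary_OA n 112 4 C.

Definition agree_cnt (J : {set 'I_n}) (p : bword n) :=
  count (fun y : bword n => [forall i in J, y i == p i]) C.

Lemma agree4 (J : {set 'I_n}) (p : bword n) : #|J| = 4 -> agree_cnt J p = 7.
Proof.
move=> HJ. case: hC => _ [_ H].
pose c (k : 'I_4) : 'I_n := enum_val (cast_ord (esym HJ) k).
have ci : injective c by move=> k1 k2 /enum_val_inj /cast_ord_inj.
pose v : {ffun 'I_4 -> bool} := [ffun k => p (c k)].
rewrite /agree_cnt -[7]/(112 %/ 2^4) -(H c ci v).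
apply: eq_count => y; apply/forallP/forallP => /= Hy.
- move=> k; rewrite ffunE; have := Hy (c k); rewrite enum_valP; exact.
- move=> i; apply/implyP => iJ.
  have := Hy (cast_ord HJ (enum_rank_in iJ i)); rewrite ffunE /c cast_ordK enum_rankK_in //.
Qed.

Hypothesis hn : 4 <= n.

Lemma agree_le4 (J : {set 'I_n}) (p : bword n) : #|J| <= 4 -> agree_cnt J p = 7 * 2 ^ (4 - #|J|).
Proof.
move eqm: (4 - #|J|) => m; elim: m J p eqm => [|m IH] J p eqm HJ.
  by rewrite agree4 //; apply/eqP; rewrite eqn_leq HJ /= -subn_eq0 eqm.
have [i]: exists i, i \in ~: J.
  have hJ3 : #|J| < 4 by rewrite -subn_gt0 eqm.
  apply/set0Pn; rewrite -card_gt0 cardsCs setCK card_ord subn_gt0; exact: leq_trans hJ3 hn.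
rewrite in_setC => iJ.
pose p' : bword n := [ffun k => if k == i then ~~ p i else p k].
have -> : agree_cnt J p = agree_cnt (i |: J) p + agree_cnt (i |: J) p'.
  rewrite /agree_cnt (count_split _ (fun y : bword n => y i == p i)); congr (_ + _).
    apply: eq_count => y; apply/idP/forallP => [/andP[/forallP Hy yi] k|Hy].
      apply/implyP; rewrite in_setU1 => /orP[/eqP->//|kJ]; exact: (implyP (Hy k)).
    apply/andP; split; last by have := Hy i; rewrite setU11.
    apply/forallP => k; apply/implyP => kJ; have := Hy k; rewrite in_setU1 kJ orbT; exact.
  apply: eq_count => y; apply/idP/forallP => [/andP[/forallP Hy yi] k|Hy].
    apply/implyP; rewrite in_setU1 ffunE => /orP[/eqP->|kJ]; first by rewrite eqxx; case: (y i) (p i) yi => [] [].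
    have kni : k != i by apply: contraNneq iJ => <-.
    rewrite (negbTE kni); exact: (implyP (Hy k)).
  apply/andP; split.
    apply/forallP => k; apply/implyP => kJ; have := Hy k; rewrite in_setU1 kJ orbT ffunE.
    have kni : k != i by apply: contraNneq iJ => <-.
    by rewrite (negbTE kni).
  by have := Hy i; rewrite setU11 ffunE eqxx; case: (y i) (p i) => [] [].
have hJ3 : #|J| < 4 by rewrite -subn_gt0 eqm.
have e1 : 4 - #|i |: J| = m by rewrite cardsU1 iJ /= subnS eqm.
have e2 : #|i |: J| <= 4 by rewrite cardsU1 iJ.
rewrite !(IH _ _ e1 e2) expnS; lia.
Qed.

Definition dT (T : {set 'I_n}) (x y : bword n) := #|T :&: [set i | x i != y i]|.

Lemma binom_sum (A : {set 'I_n}) j :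
  'C(#|A|, j) = \sum_(B : {set 'I_n} | #|B| == j) (B \subset A : nat).
Proof.
rewrite -cards_draws -sum1_card big_mkcond [RHS]big_mkcond /=.
under eq_bigr do rewrite in_set. apply: eq_bigr => B _.
by case: (B \subset A); case: (#|B| == j).
Qed.

Lemma moment (T : {set 'I_n}) (x : bword n) j : j <= 4 ->
  \sum_(y <- C) 'C(dT T x y, j) = 'C(#|T|, j) * (7 * 2 ^ (4 - j)).
Proof.
move=> hj; rewrite /dT.
under eq_bigr do rewrite binom_sum.
rewrite exchange_big /= binom_sum big_distrl /=.
apply: eq_big => [//|B /eqP hB].
pose nx : bword n := [ffun i => ~~ x i].
have -> : \sum_(y <- C) (B \subset T :&: [set i | x i != y i] : nat)
          = (B \subset T) * agree_cnt B nx.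
  rewrite /agree_cnt -sum1_count big_distrr [RHS]big_mkcond /=; apply: eq_bigr => y _.
  rewrite subsetI; case: (B \subset T) => /=; last by case: ifP.
  have -> : (B \subset [set i | x i != y i]) = [forall i in B, y i == nx i].
    apply/subsetP/forallP => [H i|H i iB]; last by rewrite in_set; have := implyP (H i) iB; rewrite ffunE; case: (x i) (y i) => [] [].
    by apply/implyP => iB; have := H i iB; rewrite in_set ffunE; case: (x i) (y i) => [] [].
  by case: [forall _ in _, _].
rewrite agree_le4 hB //; by case: (B \subset T).
Qed.


Lemma dT_le T x y : dT T x y <= #|T|.
Proof. exact/subset_leq_card/subsetIl. Qed.

Lemma sumZ (I : Type) (s : seq I) (F : I -> nat) :
  (\sum_(y <- s) (F y)%:Z = (\sum_(y <- s) F y)%:Z)%R.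
Proof. elim: s => [|a s IH]; first by rewrite !big_nil. by rewrite !big_cons IH PoszD. Qed.

Lemma moment_int (T : {set 'I_n}) (x : bword n) (q0 q1 q2 q3 q4 : int) (g : nat -> int) :
  (forall w, (w <= #|T|)%N -> g w = q0 + q1 * ('C(w,1))%:Z + q2 * ('C(w,2))%:Z
                               + q3 * ('C(w,3))%:Z + q4 * ('C(w,4))%:Z)%R ->
  (\sum_(y <- C) g (dT T x y) = q0 * 112 + q1 * ('C(#|T|,1) * 56)%:Z
     + q2 * ('C(#|T|,2) * 28)%:Z + q3 * ('C(#|T|,3) * 14)%:Z + q4 * ('C(#|T|,4) * 7)%:Z)%R.
Proof.
move=> hg.
rewrite (eq_bigr (fun y => q0 * ('C(dT T x y, 0))%:Z + q1 * ('C(dT T x y,1))%:Z + q2 * ('C(dT T x y,2))%:Z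
                               + q3 * ('C(dT T x y,3))%:Z + q4 * ('C(dT T x y,4))%:Z)%R); last first.
  by move=> y _; rewrite hg ?dT_le // bin0 mulr1.
rewrite !big_split /= -!mulr_sumr !sumZ !moment //= bin0.
by [].
Qed.
End L1.


Section Ten.
Variable C : seq (bword 10).
Hypothesis hC : is_binary_OA 10 112 4 C.
Let hn : 3 < 10. Proof. by []. Qed.

Definition dist (x y : bword 10) := dT setT x y.

Definition pc (w : nat) : nat :=
  nth 0 [:: 504; 198; 55; 6; 0; 4; 3; 0; 16; 90; 279] w.

Lemma pc_bin w : (w <= 10)%N ->
  ((pc w)%:Z = 504 + (-306) * ('C(w,1))%:Z + 163 * ('C(w,2))%:Z
                 + (-69) * ('C(w,3))%:Z + 18 * ('C(w,4))%:Z)%R.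
Proof.
by case: w => [|[|[|[|[|[|[|[|[|[|[|w]]]]]]]]]]] //= _; vm_compute.
Qed.

Lemma pc_sum x : \sum_(y <- C) pc (dist x y) = 1008.
Proof.
apply/eqP; rewrite -eqz_nat -sumZ.
rewrite /dist (@moment_int _ _ hC hn setT x 504 (-306) 163 (-69) 18 (fun w => ((pc w)%:Z)%R)); last first.
  by move=> w; rewrite cardsT card_ord => /pc_bin.
by rewrite cardsT card_ord; vm_compute.
Qed.

Lemma count_sum (T : Type) (a : pred T) (s : seq T) : count a s = \sum_(y <- s) (a y : nat).
Proof. by rewrite -sum1_count big_mkcond; apply: eq_bigr => y _; case: (a y). Qed.

Lemma dist_le x y : dist x y <= 10.
Proof. by have := dT_le setT x y; rewrite cardsT card_ord. Qed.

Lemma dist0 x y : (dist x y == 0) = (x == y).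
Proof.
rewrite /dist /dT setTI cards_eq0; apply/eqP/eqP => [H|->].
  apply/ffunP => i; apply/eqP/negPn/negP => ne.
  by have := in_set0 i; rewrite -H in_set ne.
by apply/setP => i; rewrite !in_set eqxx.
Qed.

Lemma dist0P x y : dist x y = 0 -> x = y.
Proof. by move/eqP; rewrite dist0 => /eqP. Qed.

Definition a0 x := count (pred1 x) C.

Lemma pc_ge x y : 504 * (y == x) <= pc (dist x y).
Proof.
case: eqP => [->|_]; last by rewrite muln0.
by have /eqP -> : dist x x == 0 by rewrite dist0.
Qed.

Lemma split_pc x : \sum_(y <- C) pc (dist x y) =
   504 * a0 x + \sum_(y <- C) (pc (dist x y) - 504 * (y == x)).
Proof.
rewrite /a0 count_sum big_distrr -big_split /=; apply: eq_bigr => y _.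
by rewrite subnKC // pc_ge.
Qed.

Lemma a0_le2 x : a0 x <= 2.
Proof. have := split_pc x; rewrite pc_sum; lia. Qed.

Lemma a0_supp x y : a0 x = 2 -> y \in C ->
  [|| dist x y == 0, dist x y == 4 | dist x y == 7].
Proof.
move=> h2 yC; have := split_pc x; rewrite pc_sum h2 => /eqP.
rewrite -[1008]addn0 eqn_add2l eq_sym sum_nat_seq_eq0 => /allP/(_ y yC) /=.
move=> /eqP H0; case: (eqVneq y x) H0 => [->|nyx] H0.
  by have /eqP -> : dist x x == 0 by rewrite dist0.
move: H0; rewrite muln0 subn0; have := dist_le x y.
by case: (dist x y) => [|[|[|[|[|[|[|[|[|[|[|w]]]]]]]]]]].
Qed.

Lemma dist_sum x y : dist x y = \sum_(i < 10) (x i != y i : nat).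
Proof.
rewrite /dist /dT setTI -sum1_card big_mkcond; apply: eq_bigr => i _.
by rewrite in_set; case: (x i != y i).
Qed.

Lemma distC x y : dist x y = dist y x.
Proof. by rewrite !dist_sum; apply: eq_bigr => i _; rewrite eq_sym. Qed.

Lemma dist_par x y z : dist x z + dist y z =
  dist x y + 2 * \sum_(i < 10) ((x i != z i) && (y i != z i) : nat).
Proof.
rewrite !dist_sum big_distrr -!big_split /=; apply: eq_bigr => i _.
by case: (x i); case: (y i); case: (z i).
Qed.

Lemma count_le_in (T : eqType) (a b : pred T) (s : seq T) :
  {in s, forall z, a z -> b z} -> count a s <= count b s.
Proof.
elim: s => //= z s IH H.
have H' : {in s, forall z, a z -> b z} by move=> w ws; apply: H; rewrite inE ws orbT.
apply: leq_add; last exact: IH.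
by case az: (a z) => //; rewrite (H z) // inE eqxx.
Qed.

Lemma no_dist4 x y : a0 x = 2 -> a0 y = 2 -> dist x y != 4.
Proof.
move=> hx hy; apply/negP => /eqP hxy.
pose S := [set i | x i != y i].
have hS : #|S| = 4 by move: hxy; rewrite /dist /dT setTI.
have := agree4 hC y hS; rewrite /agree_cnt => h7.
suff : count (fun z : bword 10 => [forall i in S, z i == y i]) C <= count (pred1 y) C.
  by rewrite h7 -/(a0 y) hy.
apply: count_le_in => z zC /forallP Hz.
have e : dist x z = dist x y + dist y z.
  rewrite !dist_sum -big_split /=; apply: eq_bigr => i _.
  have := Hz i; rewrite in_set.
  by case: (x i); case: (y i); case: (z i).
have := a0_supp hx zC; have := a0_supp hy zC; rewrite e hxy.
case/or3P => [/eqP/dist0P->|/eqP->|/eqP->] // _; exact: eqxx.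
Qed.

Lemma a0_pos x : x \in C -> 0 < a0 x.
Proof. by rewrite /a0 -has_count has_pred1. Qed.

Lemma doubled_le4 : count (fun x => a0 x == 2) C <= 4.
Proof.
case: (boolP (has (fun x => a0 x == 2) C)) => [/hasP[h hC' /eqP h2]|/hasPn H]; last first.
  by rewrite (eq_in_count (a2 := pred0)) ?count_pred0 // => x /H /negbTE.
have alt : {in C, forall x, a0 x == 2 -> (x == h) || (dist h x == 7)}.
  move=> x xC /eqP x2; have := no_dist4 h2 x2; have := a0_supp h2 xC.
  case/or3P => [/eqP/dist0P->|/eqP->|/eqP->] //; by rewrite ?eqxx ?orbT.
case: (boolP (has (fun x => (a0 x == 2) && (dist h x == 7)) C)) =>
    [/hasP[y yC /andP[/eqP y2 /eqP hy7]] | /hasPn H7]; last first.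
  apply: (@leq_trans (count (pred1 h) C)); last by rewrite -/(a0 h) h2.
  apply: count_le_in => x xC x2; have := alt x xC x2; have := H7 x xC.
  by rewrite x2 /= => /negbTE ->; rewrite orbF.
apply: (@leq_trans (count (predU (pred1 h) (pred1 y)) C)).
  apply: count_le_in => x xC x2; have := alt x xC x2.
  case/orP => [/= -> //|/eqP hx7]; apply/orP; right.
  move/eqP: x2 => x2; have := no_dist4 y2 x2; have := a0_supp y2 xC.
  case/or3P => [/eqP/dist0P-> _|/eqP d4|/eqP hyx _]; first by rewrite /= eqxx.
    by rewrite d4 eqxx.
  exfalso; have := dist_par h y x; rewrite hx7 hyx hy7; lia.
have := count_predUI (pred1 h) (pred1 y) C; rewrite -/(a0 h) -/(a0 y) h2 y2; lia.
Qed.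

Lemma A0_le : \sum_(x <- C) a0 x <= 116.
Proof.
have -> : \sum_(x <- C) a0 x = \sum_(x <- C) (1 + (a0 x == 2)).
  rewrite big_seq_cond [RHS]big_seq_cond; apply: eq_bigr => x /andP[xC _].
  have := a0_pos xC; have := a0_le2 x; case: (a0 x) => [|[|[|k]]] //.
rewrite big_split /= sum1_count count_predT -count_sum.
case: hC => -> _; rewrite -[116]/(112 + 4) leq_add2l; exact: doubled_le4.
Qed.
End Ten.


Section Four.
Variable C : seq (bword 10).
Hypothesis hC : is_binary_OA 10 112 4 C.
Let hn : 3 < 10. Proof. by []. Qed.

Definition x0 : bword 10 := [ffun _ => false].
Definition sg (T : {set 'I_10}) (y : bword 10) : int := ((-1) ^+ (dT T x0 y))%R.
Definition Chat (T : {set 'I_10}) : int := (\sum_(y <- C) sg T y)%R.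

Lemma Chat0 : Chat set0 = 112%R.
Proof.
rewrite /Chat /sg (eq_bigr (fun _ => ((1%N)%:Z)%R)); last by move=> y _; rewrite /dT set0I cards0.
by rewrite sumZ sum1_size; case: hC => ->.
Qed.

Definition rt (w : nat) : int :=
  nth 0%R [:: 0; 0; 0; 0; 0; -1; -4; -11; -24; -46; -80]%R w.

Lemma g_bin w : (w <= 10)%N ->
  ((-1) ^+ w - 32 * rt w = 1 + (-2) * ('C(w,1))%:Z + 4 * ('C(w,2))%:Z
                 + (-8) * ('C(w,3))%:Z + 16 * ('C(w,4))%:Z :> int)%R.
Proof.
by case: w => [|[|[|[|[|[|[|[|[|[|[|w]]]]]]]]]]] //= _; vm_compute.
Qed.

Lemma Chat_dec T : exists R : int,
  (Chat T = 112 + (-2) * ('C(#|T|,1) * 56)%:Z + 4 * ('C(#|T|,2) * 28)%:Z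
     + (-8) * ('C(#|T|,3) * 14)%:Z + 16 * ('C(#|T|,4) * 7)%:Z + 32 * R)%R.
Proof.
exists (\sum_(y <- C) rt (dT T x0 y))%R.
rewrite -(@moment_int _ _ hC hn T x0 1 (-2) 4 (-8) 16 (fun w => (-1) ^+ w - 32 * rt w)%R); last first.
  move=> w hw; apply: g_bin; have h10 := subset_leq_card (subsetT T).
  rewrite cardsT card_ord in h10; exact: leq_trans hw h10.
rewrite /Chat /sg sumrB mulr_sumr; by rewrite subrK.
Qed.

Lemma Chat_big (T : {set 'I_10}) : (4 < #|T| < 9)%N -> (256 <= Chat T ^+ 2)%R.
Proof.
move=> hT; have [R ->] := Chat_dec T.
have [t ht] : exists t : int, (112 + (-2) * ('C(#|T|,1) * 56)%:Z + 4 * ('C(#|T|,2) * 28)%:Z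
     + (-8) * ('C(#|T|,3) * 14)%:Z + 16 * ('C(#|T|,4) * 7)%:Z = 16 * (2 * t + 1))%R.
  case/andP: hT; case: #|T| => [|[|[|[|[|[|[|[|[|k]]]]]]]]] //= _ _.
  - by exists 3%R; vm_compute.
  - by exists 17%R; vm_compute.
  - by exists 52%R; vm_compute.
  - by exists 122%R; vm_compute.
rewrite ht expr2.
have [h|h] : (0 <= t + R \/ t + R <= -1)%R by lia.
all: nia.
Qed.

Lemma card_sets : #|{set 'I_10}| = 1024.
Proof. by rewrite -cardsT -powersetT card_powerset cardsT card_ord. Qed.

Lemma dT_del (T : {set 'I_10}) (x : bword 10) i : i \in T ->
  dT T x0 x = (x i : nat) + dT (T :\ i) x0 x.
Proof.
move=> iT; rewrite /dT (cardsD1 i (T :&: _)).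
have -> : (T :&: [set j | x0 j != x j]) :\ i = (T :\ i) :&: [set j | x0 j != x j].
  by apply/setP => j; rewrite !inE andbA.
by rewrite !inE iT ffunE /=; case: (x i).
Qed.

Lemma sg_flip (T : {set 'I_10}) (x y : bword 10) i : i \in T -> x i != y i ->
  (sg (T :\ i) x * sg (T :\ i) y = - (sg T x * sg T y))%R.
Proof.
move=> iT nxy; rewrite /sg -!exprD (dT_del x iT) (dT_del y iT).
have -> : (x i : nat) + dT (T :\ i) x0 x + ((y i : nat) + dT (T :\ i) x0 y) =
          (dT (T :\ i) x0 x + dT (T :\ i) x0 y).+1.
  by move: nxy; case: (x i); case: (y i) => //= _; lia.
by rewrite exprS mulN1r opprK.
Qed.

Lemma inner (x y : bword 10) : (\sum_(T : {set 'I_10}) sg T x * sg T y = (1024 * (x == y))%:Z)%R.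
Proof.
case: (eqVneq x y) => [<-|nxy].
  rewrite (eq_bigr (fun _ => 1%R)); last by move=> T _; rewrite -expr2 /sg sqrr_sign.
  by rewrite sumr_const card_sets muln1.
have [i ni] : exists i, x i != y i.
  apply/existsP; apply: contraNT nxy; rewrite negb_exists => /forallP H.
  by apply/eqP/ffunP => i; apply/eqP; have := H i; rewrite negbK.
pose f (T : {set 'I_10}) := if i \in T then T :\ i else i |: T.
have finv : involutive f.
  move=> T; rewrite /f; case: (boolP (i \in T)) => iT.
    by rewrite setD11 setD1K.
  by rewrite setU11 setU1K.
have fneg T : (sg (f T) x * sg (f T) y = - (sg T x * sg T y))%R.
  rewrite /f; case: (boolP (i \in T)) => iT; first exact: sg_flip.
  have := sg_flip (setU11 i T) ni; rewrite setU1K // => ->; by rewrite opprK.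
set S := (\sum_T _)%R.
have : S = (- S)%R.
  rewrite {1}/S (reindex_inj (inv_inj finv)) /= /S -sumrN; apply: eq_bigr => T _; exact: fneg.
rewrite muln0 /=; lia.
Qed.

Lemma parseval : (\sum_(T : {set 'I_10}) Chat T ^+ 2 = (1024 * \sum_(x <- C) a0 C x)%:Z)%R.
Proof.
rewrite (eq_bigr (fun T => \sum_(x <- C) \sum_(y <- C) sg T x * sg T y)%R); last first.
  by move=> T _; rewrite expr2 /Chat mulr_suml; apply: eq_bigr => x _; rewrite mulr_sumr.
rewrite exchange_big /=.
rewrite (eq_bigr (fun x => \sum_(y <- C) (1024 * (x == y))%:Z)%R); last first.
  by move=> x _; rewrite exchange_big /=; apply: eq_bigr => y _; rewrite inner.
rewrite (eq_bigr (fun x => (\sum_(y <- C) (1024 * (x == y)))%:Z)%R); last first.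
  by move=> x _; rewrite sumZ.
rewrite sumZ big_distrr /=; congr Posz; apply: eq_bigr => x _.
by rewrite /a0 count_sum big_distrr /=; apply: eq_bigr => y _; rewrite eq_sym.
Qed.

Lemma count_k k : \sum_(T : {set 'I_10}) (#|T| == k : nat) = 'C(10, k).
Proof.
have := card_draws 'I_10 k; rewrite card_ord => <-.
rewrite -sum1_card [RHS]big_mkcond /=; apply: eq_bigr => T _; rewrite inE; by case: (#|T| == k).
Qed.

Definition lb (T : {set 'I_10}) : nat :=
  12544 * (#|T| == 0) + 256 * ((#|T| == 5) + (#|T| == 6) + (#|T| == 7) + (#|T| == 8)).

Lemma lb_sum : \sum_(T : {set 'I_10}) lb T = 1024 * 169.
Proof.
rewrite /lb big_split /= -!big_distrr /= !big_split /= !count_k.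
by [].
Qed.

Lemma lb_le T : ((lb T)%:Z <= Chat T ^+ 2)%R.
Proof.
rewrite /lb; case: (boolP (#|T| == 0)) => [/eqP h0|h0].
  have -> : T = set0 by apply/eqP; rewrite -cards_eq0 h0.
  by rewrite cards0 Chat0.
case: (boolP ((4 < #|T|) && (#|T| < 9))%N) => hT.
  apply: le_trans (Chat_big hT); move: hT; case: #|T| => [|[|[|[|[|[|[|[|[|k]]]]]]]]] //.
rewrite muln0 add0n.
have -> : ((#|T| == 5) + (#|T| == 6) + (#|T| == 7) + (#|T| == 8) = 0)%N.
  by move: hT; case: #|T| => [|[|[|[|[|[|[|[|[|k]]]]]]]]].
by rewrite muln0 sqr_ge0.
Qed.

Lemma contra_main : False.
Proof.
have h1 : (((1024 * 169)%N)%:Z <= (1024 * \sum_(x <- C) a0 C x)%:Z)%R.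
  rewrite -parseval -lb_sum -sumZ; apply: ler_sum => T _; exact: lb_le.
have := A0_le hC; rewrite lez_nat in h1; lia.
Qed.
End Four.

Definition proj11 (x : bword 11) : bword 10 := [ffun i => x (widen_ord (leqnSn 10) i)].

Lemma proj_OA (C : seq (bword 11)) : is_binary_OA 11 112 4 C ->
  is_binary_OA 10 112 4 (map proj11 C).
Proof.
case=> hs [hd H]; split; first by rewrite size_map.
split=> // c ci v; rewrite count_map.
have ci' : injective (fun k => widen_ord (leqnSn 10) (c k)).
  by move=> k1 k2 /(congr1 val) /= /val_inj /ci.
rewrite -(H _ ci' v); apply: eq_count => x /=.
by apply/forallP/forallP => Hx k; have := Hx k; rewrite ffunE.
Qed.

Theorem theorem4p3 :
  forall n : nat, (n = 10 \/ n = 11) ->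
  ~ (exists C : seq (bword n), is_binary_OA n 112 4 C).
Proof.
move=> n [->|->] [C hC]; first exact: contra_main hC.
exact: contra_main (proj_OA hC).
Qed.
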